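(* Let $q$ be a set of operations on a set $\Omega$. For all $a,b\in\Omega$: $a\sim_q b$ if and only if for every formula $\phi(x,y)$ of $\mathscr L^-_{\infty\infty}(q)$ with exactly two free variables and every $c\in\Omega$, $\Omega,q\models\phi(a,c)\iff\Omega,q\models\phi(b,c)$.
   Context: A set of operations on $\Omega$ is a set of finitary relations on $\Omega$ and quantifiers on $\Omega$ (subsets of $\mathcal P(\Omega^{k_1})\times\cdots\times\mathcal P(\Omega^{k_l})$, $l,k_i$ finite). $\mathscr L^-_{\infty\infty}(q)$ is the equality-free infinitary logic (arbitrary conjunctions/disjunctions, quantification over arbitrary sequences of variables) with a predicate symbol for each relation in $q$ and a generalized (Lindström) quantifier symbol for each quantifier in $q$, interpreted in $\Omega$. $a\sim_q b$ iff for every formula $\phi(x,\bar y)$ of $\mathscr L^-_{\infty\infty}(q)$ and every tuple $\bar c$ from $\Omega$, $\Omega,q\models\phi(a,\bar c)\iff\Omega,q\models\phi(b,\bar c)$. *)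

(* Defs.v *)
(* Equality-free infinitary logic L^-_{oo,oo}(q) with
   generalized (Lindstrom) quantifiers, interpreted in a set Omega. *)
From Stdlib Require Import Arith.


Definition fin (n : nat) : Type := { i : nat | i < n }.

(* A set of operations on Omega: an (indexed) family of finitary relations
   and an (indexed) family of quantifiers.
   A quantifier of type (k_1,...,k_l) is a subset of
   P(Omega^{k_1}) x ... x P(Omega^{k_l}). *)
Record ops (Omega : Type) : Type := Ops {
  rel_idx : Type;
  rel_ar  : rel_idx -> nat;
  rel_int : forall r : rel_idx, (fin (rel_ar r) -> Omega) -> Prop;
  qu_idx  : Type;
  qu_l    : qu_idx -> nat;
  qu_k    : forall Q : qu_idx, fin (qu_l Q) -> nat;
  qu_int  : forall Q : qu_idx,
              (forall j : fin (qu_l Q), (fin (qu_k Q j) -> Omega) -> Prop) -> Prop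
}.
Arguments rel_idx {Omega} q : rename.
Arguments rel_ar {Omega} q r : rename.
Arguments rel_int {Omega} q r _ : rename.
Arguments qu_idx {Omega} q : rename.
Arguments qu_l {Omega} q Q : rename.
Arguments qu_k {Omega} q Q j : rename.
Arguments qu_int {Omega} q Q _ : rename.

Set Implicit Arguments.

(* Formulas with free variables among the type X.  Conjunctions/disjunctions
   are over arbitrary index types, quantification is over arbitrary sequences
   (families indexed by an arbitrary type Y) of new variables. *)
Inductive formula (Omega : Type) (q : ops Omega) : Type -> Type :=
| FRel  : forall X (r : rel_idx q), (fin (rel_ar q r) -> X) -> formula q X
| FNot  : forall X, formula q X -> formula q X
| FAnd  : forall X (I : Type), (I -> formula q X) -> formula q X
| FOr   : forall X (I : Type), (I -> formula q X) -> formula q X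
| FEx   : forall X (Y : Type), formula q (X + Y) -> formula q X
| FAll  : forall X (Y : Type), formula q (X + Y) -> formula q X
| FQu   : forall X (Q : qu_idx q),
            (forall j : fin (qu_l q Q), formula q (X + fin (qu_k q Q j))) ->
            formula q X.

Definition ext {X Y Omega : Type} (e : X -> Omega) (c : Y -> Omega)
  : X + Y -> Omega :=
  fun z => match z with inl x => e x | inr y => c y end.

Fixpoint sat (Omega : Type) (q : ops Omega) (X : Type) (phi : formula q X)
  : (X -> Omega) -> Prop :=
  match phi in formula _ X0 return (X0 -> Omega) -> Prop with
  | @FRel _ _ _ r v => fun e => rel_int q r (fun j => e (v j))
  | @FNot _ _ _ psi => fun e => ~ sat psi e
  | @FAnd _ _ _ _ f => fun e => forall i, sat (f i) e
  | @FOr _ _ _ _ f => fun e => exists i, sat (f i) e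
  | @FEx _ _ _ Y psi => fun e => exists c : Y -> Omega, sat psi (ext e c)
  | @FAll _ _ _ Y psi => fun e => forall c : Y -> Omega, sat psi (ext e c)
  | @FQu _ _ _ Q phis => fun e =>
      qu_int q Q (fun j t => sat (phis j) (ext e t))
  end.

Fixpoint free (Omega : Type) (q : ops Omega) (X : Type) (phi : formula q X)
  : X -> Prop :=
  match phi in formula _ X0 return X0 -> Prop with
  | @FRel _ _ _ r v => fun x => exists j, v j = x
  | @FNot _ _ _ psi => fun x => free psi x
  | @FAnd _ _ _ _ f => fun x => exists i, free (f i) x
  | @FOr _ _ _ _ f => fun x => exists i, free (f i) x
  | @FEx _ _ _ _ psi => fun x => free psi (inl x)
  | @FAll _ _ _ _ psi => fun x => free psi (inl x)
  | @FQu _ _ _ Q phis => fun x => exists j, free (phis j) (inl x)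
  end.

Definition simq (Omega : Type) (q : ops Omega) (a b : Omega) : Prop :=
  forall (Y : Type) (phi : formula q (unit + Y)) (c : Y -> Omega),
    sat phi (ext (fun _ : unit => a) c) <-> sat phi (ext (fun _ : unit => b) c).

(* Main.v *)
Require Import Defs.
From Stdlib Require Import Classical FunctionalExtensionality PropExtensionality.

Section S.
Variable Omega : Type.
Variable q : ops Omega.

Definition liftr {X X' Y : Type} (h : X -> X') : X + Y -> X' + Y :=
  fun z => match z with inl x => inl (h x) | inr y => inr y end.

Fixpoint rename {X} (phi : formula q X) {struct phi} : forall X', (X -> X') -> formula q X' :=
  match phi in formula _ X0 return forall X', (X0 -> X') -> formula q X' with
  | @FRel _ _ _ r v => fun X' h => @FRel _ q X' r (fun j => h (v j))
  | @FNot _ _ _ psi => fun X' h => @FNot _ q X' (rename psi _ h)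
  | @FAnd _ _ _ J f => fun X' h => @FAnd _ q X' J (fun i => rename (f i) _ h)
  | @FOr _ _ _ J f => fun X' h => @FOr _ q X' J (fun i => rename (f i) _ h)
  | @FEx _ _ _ Y psi => fun X' h => @FEx _ q X' Y (rename psi _ (liftr h))
  | @FAll _ _ _ Y psi => fun X' h => @FAll _ q X' Y (rename psi _ (liftr h))
  | @FQu _ _ _ Q phis => fun X' h => @FQu _ q X' Q (fun j => rename (phis j) _ (liftr h))
  end.

Lemma sat_rename {X} (phi : formula q X) : forall X' (h : X -> X') e e',
  (forall x, e (h x) = e' x) -> (sat (@rename X phi X' h) e <-> sat phi e').
Proof.
  induction phi; intros X' h e e' He; simpl.
  - replace (fun j => e (h (x j))) with (fun j => e' (x j)); [tauto|].
    apply functional_extensionality; intros; now rewrite He.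
  - rewrite (IHphi X' h e e' He); tauto.
  - split; intros H0 i; apply (H i X' h e e' He); auto.
  - split; intros [i Hi]; exists i; apply (H i X' h e e' He); auto.
  - split; intros [c Hc]; exists c;
      apply (IHphi _ (liftr h) (ext e c) (ext e' c)); auto;
      intros [x|y]; simpl; auto.
  - split; intros Hc c;
      apply (IHphi _ (liftr h) (ext e c) (ext e' c)); auto;
      intros [x|y]; simpl; auto.
  - match goal with |- qu_int q Q ?F <-> qu_int q Q ?G =>
      replace F with G; [tauto|] end.
    apply functional_extensionality_dep; intro j.
    apply functional_extensionality; intro t.
    apply propositional_extensionality; symmetry.
    apply (H j _ (liftr h) (ext e t) (ext e' t)).
    intros [x|y]; simpl; auto.
Qed.

Lemma free_rename {X} (phi : formula q X) : forall X' (h : X -> X') v,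
  free phi v -> free (@rename X phi X' h) (h v).
Proof.
  induction phi; intros X' h v Hv; simpl in *.
  - destruct Hv as [j Hj]; exists j; now rewrite Hj.
  - auto.
  - destruct Hv as [i Hi]; exists i; auto.
  - destruct Hv as [i Hi]; exists i; auto.
  - apply (IHphi _ (liftr h) (inl v)); auto.
  - apply (IHphi _ (liftr h) (inl v)); auto.
  - destruct Hv as [j Hj]; exists j; apply (H j _ (liftr h) (inl v)); auto.
Qed.

Lemma coincide {X} (phi : formula q X) : forall e1 e2,
  (forall x, free phi x -> e1 x = e2 x) -> (sat phi e1 <-> sat phi e2).
Proof.
  induction phi; intros e1 e2 He; simpl in *.
  - replace (fun j => e1 (x j)) with (fun j => e2 (x j)); [tauto|].
    apply functional_extensionality; intros j; symmetry; apply He; eauto.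
  - rewrite (IHphi e1 e2 He); tauto.
  - split; intros H0 i; apply (H i e1 e2); eauto.
  - split; intros [i Hi]; exists i; apply (H i e1 e2); eauto.
  - split; intros [c Hc]; exists c; apply (IHphi (ext e1 c) (ext e2 c)); auto;
      intros [x|y] Hf; simpl; auto.
  - split; intros Hc c; apply (IHphi (ext e1 c) (ext e2 c)); auto;
      intros [x|y] Hf; simpl; auto.
  - match goal with |- qu_int q Q ?F <-> qu_int q Q ?G =>
      replace F with G; [tauto|] end.
    apply functional_extensionality_dep; intro j.
    apply functional_extensionality; intro t.
    apply propositional_extensionality; symmetry.
    apply (H j (ext e1 t) (ext e2 t)).
    intros [x|y] Hf; simpl; eauto.
Qed.

Definition fiff X (A B : formula q X) : formula q X :=
  @FAnd _ q X bool (fun b => if b then @FOr _ q X bool (fun c => if c then FNot A else B)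
                             else @FOr _ q X bool (fun c => if c then FNot B else A)).

Lemma sat_fiff X (A B : formula q X) e : sat (@fiff X A B) e <-> (sat A e <-> sat B e).
Proof.
  simpl; split.
  - intros H; pose proof (H true) as [[|] H1]; pose proof (H false) as [[|] H2];
      simpl in *; tauto.
  - intros H [|]; destruct (classic (sat A e)).
    + exists false; simpl; tauto.
    + exists true; simpl; auto.
    + exists false; simpl; tauto.
    + exists true; simpl; tauto.
Qed.

End S.

Theorem lemma11 (Omega : Type) (q : ops Omega) (a b : Omega) :
  simq q a b <->
  (forall (phi : formula q (unit + unit)),
     free phi (inl tt) -> free phi (inr tt) ->
     forall c : Omega,
       sat phi (ext (fun _ : unit => a) (fun _ : unit => c)) <->
       sat phi (ext (fun _ : unit => b) (fun _ : unit => c))).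
Proof.
  split.
  - intros H phi _ _ c. apply H.
  - intros H Y phi c.
    destruct (classic (free phi (inl tt))) as [Hf|Hf].
    2:{ apply coincide; intros [[]|y] Hx; simpl; [contradiction|auto]. }
    set (h1 := fun z : unit + Y => match z with inl _ => inl (inl tt) | inr y => inr y end
               : (unit + unit) + Y).
    set (h2 := fun z : unit + Y => match z with inl _ => inl (inr tt) | inr y => inr y end
               : (unit + unit) + Y).
    set (psi := @FAll _ q (unit + unit) Y (@fiff Omega q _ (@rename Omega q _ phi _ h1) (@rename Omega q _ phi _ h2))).
    assert (F1 : free psi (inl tt)).
    { simpl. exists true. exists true. simpl. apply (@free_rename Omega q _ phi _ h1 _ Hf). }
    assert (F2 : free psi (inr tt)).
    { simpl. exists true. exists false. simpl. apply (@free_rename Omega q _ phi _ h2 _ Hf). }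
    assert (Hb : sat psi (ext (fun _ : unit => b) (fun _ : unit => b))).
    { simpl. intros c'. apply sat_fiff.
      rewrite (@sat_rename Omega q _ phi _ h1 _ (ext (fun _ : unit => b) c')) by (intros [[]|y]; reflexivity).
      rewrite (@sat_rename Omega q _ phi _ h2 _ (ext (fun _ : unit => b) c')) by (intros [[]|y]; reflexivity).
      tauto. }
    apply (H psi F1 F2 b) in Hb. simpl in Hb.
    specialize (Hb c). apply sat_fiff in Hb.
    rewrite (@sat_rename Omega q _ phi _ h1 _ (ext (fun _ : unit => a) c)) in Hb by (intros [[]|y]; reflexivity).
    rewrite (@sat_rename Omega q _ phi _ h2 _ (ext (fun _ : unit => b) c)) in Hb by (intros [[]|y]; reflexivity).
    exact Hb.
Qed.
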